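(* Let $B_1,\dots,B_n$ be independent real-valued service times with finite means $\mu_i$, each with a distribution symmetric around its mean, and put $X_i=B_i-\mu_i$. Fix a sequence $\tau\in\mathsf S_n$ and use the mean-based schedule. Then for each $k\in\{1,\dots,n-1\}$, $$\mathbb EW_{k+1}\le\mathbb E\bigl(X_{\tau(1)}+\cdots+X_{\tau(k)}\bigr)^++\mathbb E\bigl(X_{\tau(1)}+\cdots+X_{\tau(k-1)}\bigr)^+,$$ with an empty sum equal to $0$.
   Context: Under sequence $\tau$ ($\tau(i)$ the patient in slot $i$) and the mean-based schedule (interarrival time after patient $j$ equal to $\mu_j$), the waiting times are $W_1=0$, $W_{i+1}=(W_i+X_{\tau(i)})^+$ with $a^+=\max\{0,a\}$. *)

(* Defs.v *)
From HB Require Import structures.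
From mathcomp Require Import all_boot all_order all_algebra all_fingroup.
From mathcomp Require Import all_classical all_reals all_analysis.
Set Implicit Arguments. Unset Strict Implicit. Unset Printing Implicit Defensive.
Import Order.TTheory GRing.Theory Num.Theory.
Local Open Scope classical_set_scope.
Local Open Scope ring_scope.

Definition mutually_independent {R : realType} {d : measure_display}
  {T : measurableType d} (P : probability T R) (n : nat)
  (B : 'I_n -> T -> R) : Prop :=
  forall (J : {set 'I_n}) (A : 'I_n -> set R),
    (forall j, j \in J -> measurable (A j)) ->
    P (\bigcap_(j in [set j | j \in J]) (B j @^-1` A j)) =
    (\prod_(j in J) P (B j @^-1` A j))%E.

Definition symmetric_around {R : realType} {d : measure_display}
  {T : measurableType d} (P : probability T R) (B : T -> R) (m : R) : Prop :=
  forall A : set R, measurable A ->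
    P [set w | B w - m \in A] = P [set w | m - B w \in A].

(* Lindley recursion: W_1 = 0, W_{i+1} = (W_i + x_i)^+ ; [wait xs] is the
   waiting time after processing the increments xs in order. *)
Definition wait {R : realType} (xs : seq R) : R :=
  foldl (fun w x => Num.max 0 (w + x)) 0 xs.

Definition pos_part {R : realType} (x : R) : R := Num.max 0 x.

(* Main.v *)
Require Import Defs.
From HB Require Import structures.
From mathcomp Require Import all_boot all_order all_algebra all_fingroup.
From mathcomp Require Import all_classical all_reals all_analysis.
From mathcomp Require Import measurable_realfun.
From mathcomp Require Import ring lra.
Import Order.TTheory GRing.Theory Num.Theory.
Local Open Scope classical_set_scope.
Local Open Scope ring_scope.
Section Comb.
Variable R : realType.

Fixpoint sgn_sum (l : seq R) (F : seq R -> R) : R :=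
  match l with
  | [::] => F [::]
  | x :: l' => sgn_sum l' (fun s => F (x :: s)) + sgn_sum l' (fun s => F (- x :: s))
  end.

Lemma sgn_sum_le l F G : (forall s, size s = size l -> F s <= G s) ->
  sgn_sum l F <= sgn_sum l G.
Proof.
elim: l F G => [|x l IH] F G H /=; first exact: H.
by apply: lerD; apply: IH => s hs; apply: H; rewrite /= hs.
Qed.

Lemma sgn_sum_ext l F G : (forall s, size s = size l -> F s = G s) ->
  sgn_sum l F = sgn_sum l G.
Proof.
move=> H; apply/eqP; rewrite eq_le; apply/andP; split; apply: sgn_sum_le.
  by move=> s hs; rewrite H.
by move=> s hs; rewrite H.
Qed.

Lemma sgn_sumD l F G : sgn_sum l (fun s => F s + G s) = sgn_sum l F + sgn_sum l G.
Proof.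
elim: l F G => [|x l IH] F G //=.
by rewrite (IH (fun s => F (x :: s))) (IH (fun s => F (- x :: s))) addrACA.
Qed.

Lemma sgn_sumZ l c F : sgn_sum l (fun s => c * F s) = c * sgn_sum l F.
Proof.
elim: l F => [|x l IH] F //=.
by rewrite (IH (fun s => F (x :: s))) (IH (fun s => F (- x :: s))) mulrDr.
Qed.

Lemma sgn_sum_cst l c : sgn_sum l (fun _ => c) = 2 ^+ size l * c.
Proof.
elim: l => [|x l IH] /=; first by rewrite expr0 mul1r.
by rewrite IH exprS -mulrA mulr2n mulrDl !mul1r.
Qed.

Lemma sgn_sum_rcons l b F : sgn_sum (rcons l b) F =
  sgn_sum l (fun s => F (rcons s b)) + sgn_sum l (fun s => F (rcons s (- b))).
Proof.
elim: l F => [|x l IH] F //=.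
rewrite (IH (fun s => F (x :: s))) (IH (fun s => F (- x :: s))).
by rewrite addrACA.
Qed.

Lemma sgn_sum_neg l F : sgn_sum l (fun s => F (map -%R s)) = sgn_sum l F.
Proof.
elim: l F => [|x l IH] F //=.
rewrite (IH (fun s => F (- x :: s))) opprK.
by rewrite (IH (fun s => F (x :: s))) addrC.
Qed.

Lemma sgn_sum_take z k H : (k <= size z)%N ->
  sgn_sum z (fun s => H (take k s)) = 2 ^+ (size z - k) * sgn_sum (take k z) H.
Proof.
elim: z k H => [|x z IH] k H /=.
  by rewrite leqn0 => /eqP -> /=; rewrite expr0 mul1r.
case: k => [|k] hk.
  by rewrite /= subn0 !sgn_sum_cst /= exprS -mulrA mulr_natl mulr2n.

by rewrite /= (IH k (fun s => H (x :: s))) // (IH k (fun s => H (-x :: s))) // subSS mulrDr.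
Qed.

Definition sumR (s : seq R) : R := \sum_(x <- s) x.

Lemma sumR_rcons s b : sumR (rcons s b) = sumR s + b.
Proof. by rewrite /sumR -cats1 big_cat big_seq1. Qed.

Lemma sumR_neg s : sumR (map -%R s) = - sumR s.
Proof. by rewrite /sumR big_map sumrN. Qed.

Lemma wait_rcons (s : seq R) b : wait (rcons s b) = Num.max 0 (wait s + b).
Proof. by rewrite /wait foldl_rcons. Qed.

Lemma max0_id (u : R) : Num.max 0 u = u + Num.max 0 (- u).
Proof.
have [h|h] := leP 0 u.
  by rewrite (_ : Num.max 0 (- u) = 0) ?addr0 //; apply/max_idPl; rewrite oppr_le0.
by rewrite (_ : Num.max 0 (- u) = - u) ?subrr //; apply/max_idPr; rewrite oppr_ge0 ltW.
Qed.

Lemma dominance l (phi : R -> R) : {homo phi : x y / x <= y} ->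
  sgn_sum l (fun s => phi (wait s)) <= sgn_sum l (fun s => phi `|sumR s|).
Proof.
elim/last_ind: l phi => [|l b IH] phi hphi.
  by rewrite /= /wait /sumR big_nil normr0.
rewrite !sgn_sum_rcons.
have h1 : forall c, sgn_sum l (fun s => phi (wait (rcons s c))) <=
    sgn_sum l (fun s => phi (Num.max 0 (`|sumR s| + c))).
  move=> c.
  rewrite (sgn_sum_ext _ _ (fun s => (fun y => phi (Num.max 0 (y + c))) (wait s)));
    last by move=> s _; rewrite wait_rcons.
  apply: (IH (fun y => phi (Num.max 0 (y + c)))).
  by move=> x y hxy; apply: hphi; rewrite ge_max le_max lexx /= le_max lerD2r hxy orbT.
apply: le_trans (lerD (h1 b) (h1 (- b))) _.
rewrite -!sgn_sumD; apply: sgn_sum_le => s _.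
rewrite !sumR_rcons.
have [t0|t0] := leP 0 (sumR s).
  rewrite ger0_norm //; apply: lerD; apply: hphi;
    by rewrite ge_max normr_ge0 ler_norm.
rewrite ltr0_norm // addrC; apply: lerD; apply: hphi; rewrite ge_max normr_ge0 /=.
  by rewrite -normrN opprD ler_norm.
by rewrite -normrN opprD opprK ler_norm.
Qed.

Lemma core l b :
  sgn_sum (rcons l b) wait <= sgn_sum (rcons l b) (fun s => Num.max 0 (sumR s))
    + sgn_sum (rcons l b) (fun s => Num.max 0 (sumR (take (size l) s))).
Proof.
rewrite !sgn_sum_rcons.
have h1 : forall c, sgn_sum l (fun s => wait (rcons s c)) <=
    sgn_sum l (fun s => Num.max 0 (`|sumR s| + c)).
  move=> c.
  rewrite (sgn_sum_ext _ _ (fun s => (fun y => Num.max 0 (y + c)) (wait s)));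
    last by move=> s _; rewrite wait_rcons.
  apply: (dominance l (fun y => Num.max 0 (y + c))).
  by move=> x y hxy; rewrite ge_max le_max lexx /= le_max lerD2r hxy orbT.
apply: le_trans (lerD (h1 b) (h1 (- b))) _.
rewrite -!sgn_sumD.
rewrite (sgn_sum_ext _ _ (fun s =>
   (Num.max 0 (sumR s + b) + Num.max 0 (sumR s + - b)) + 2 * Num.max 0 (sumR (map -%R s)))); last first.
  move=> s _; rewrite sumR_neg.
  have [t0|t0] := leP 0 (sumR s).
    rewrite ger0_norm // (_ : Num.max 0 (- sumR s) = 0) ?mulr0 ?addr0 //.
    by apply/max_idPl; rewrite oppr_le0.
  rewrite ltr0_norm // (_ : Num.max 0 (- sumR s) = - sumR s); last first.
    by apply/max_idPr; rewrite oppr_ge0 ltW.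
  rewrite (max0_id (- sumR s + b)) (max0_id (- sumR s - b)) !opprD !opprK.
  lra.
have E1 : sgn_sum l (fun s => Num.max 0 (sumR (take (size l) (rcons s b))) +
   Num.max 0 (sumR (take (size l) (rcons s (-b))))) =
   sgn_sum l (fun s => 2 * Num.max 0 (sumR s)).
  apply: sgn_sum_ext => s hs; rewrite -!cats1 -hs !take_size_cat //.
  by rewrite mulr_natl mulr2n.
have E2 : sgn_sum l (fun s => 2 * Num.max 0 (sumR s)) =
    sgn_sum l (fun s => 2 * Num.max 0 (sumR (map -%R s))).
  exact: (esym (sgn_sum_neg l (fun s => 2 * Num.max 0 (sumR s)))).
rewrite [X in _ <= X]sgn_sumD E1 E2 -sgn_sumD.
apply: sgn_sum_le => s _; rewrite !sumR_rcons.
by [].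
Qed.
Lemma comb_main (z : seq R) k : (1 <= k)%N -> (k <= size z)%N ->
  sgn_sum z (fun s => wait (take k s)) <=
  sgn_sum z (fun s => Num.max 0 (sumR (take k s))) +
  sgn_sum z (fun s => Num.max 0 (sumR (take k.-1 s))).
Proof.
move=> hk1 hk2.
rewrite [X in _ <= _ + X](sgn_sum_ext _ _ (fun s => (fun u => Num.max 0 (sumR (take k.-1 u))) (take k s)));
  last by move=> s _; rewrite take_takel ?leq_pred.
rewrite (sgn_sum_take z k wait hk2) (sgn_sum_take z k (fun u => Num.max 0 (sumR u)) hk2) (sgn_sum_take z k (fun u => Num.max 0 (sumR (take k.-1 u))) hk2) -mulrDr.
apply: ler_wpM2l; first exact: exprn_ge0.
have hs : size (take k z) = k by rewrite size_takel.
move: (take k z) hs; case/lastP => [|l b] /=; first by move=> h; rewrite -h in hk1.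
rewrite size_rcons => hs; rewrite -hs /=.
exact: core.
Qed.
Fixpoint signed (e : seq bool) (z : seq R) : seq R :=
  match e, z with
  | b :: e', x :: z' => (if b then - x else x) :: signed e' z'
  | _, _ => [::]
  end.

Fixpoint allsigns (m : nat) : seq (seq bool) :=
  if m is m'.+1 then [seq false :: e | e <- allsigns m'] ++ [seq true :: e | e <- allsigns m']
  else [:: [::]].

Lemma size_allsigns m : size (allsigns m) = (2 ^ m)%N.
Proof. by elim: m => //= m IH; rewrite size_cat !size_map IH expnS mul2n addnn. Qed.

Lemma allsigns_size m e : e \in allsigns m -> size e = m.
Proof.
elim: m e => [|m IH] e /=; first by rewrite inE => /eqP ->.
rewrite mem_cat => /orP [] /mapP [e' /IH he ->] /=; by rewrite he.
Qed.

Lemma size_signed e z : size e = size z -> size (signed e z) = size z.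
Proof. by elim: e z => [|b e IH] [|x z] //= [/IH ->]. Qed.

Lemma nth_signed e z i : size e = size z ->
  nth 0 (signed e z) i = if nth false e i then - nth 0 z i else nth 0 z i.
Proof.
elim: e z i => [|b e IH] [|x z] i //=.
- by move=> _; rewrite !nth_nil.
- by case=> hs; case: i => [|i] //=; apply: IH.
Qed.

Lemma sgn_sum_allsigns z F :
  sgn_sum z F = \sum_(e <- allsigns (size z)) F (signed e z).
Proof.
elim: z F => [|x z IH] F /=; first by rewrite big_seq1.
by rewrite big_cat !big_map /= (IH (fun s => F (x :: s))) (IH (fun s => F (- x :: s))).
Qed.

Lemma sgn_sum_ge0 l F : (forall s, 0 <= F s) -> 0 <= sgn_sum l F.
Proof.
move=> h; apply: le_trans (sgn_sum_le l (fun _ => 0) F _); last by move=> s _; exact: h.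
by rewrite sgn_sum_cst mulr0.
Qed.

End Comb.
Arguments signed {R}.
Arguments sgn_sum {R}.
Arguments size_signed {R}.
Arguments nth_signed {R}.
Arguments sgn_sum_allsigns {R}.
Arguments comb_main {R}.
Arguments sgn_sum_ge0 {R}.
Arguments sumR {R}.

Lemma sum_const_seq (V : nmodType) (I : Type) (s : seq I) (x : V) :
  \sum_(i <- s) x = x *+ size s.
Proof. by elim: s => [|a s IH]; rewrite ?big_nil ?big_cons ?IH ?mulrS. Qed.

Section MFoldl.
Context (R : realType) (d' : measure_display) (T' : measurableType d').
Variable f : R -> R -> R.
Hypothesis hf : forall h1 h2 : T' -> R, measurable_fun setT h1 ->
  measurable_fun setT h2 -> measurable_fun setT (fun x => f (h1 x) (h2 x)).

Lemma mfoldl m (g : T' -> m.-tuple R) (h : T' -> R) j :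
  measurable_fun setT h -> measurable_fun setT g ->
  measurable_fun setT (fun x => foldl f (h x) (take j (g x))).
Proof.
elim: m g h j => [|m IH] g h j mh mg.
  rewrite (_ : (fun x => _) = h) //; apply/funext => x.
  by rewrite (size0nil (size_tuple (g x))).
case: j => [|j].
  by rewrite (_ : (fun x => _) = h) //; apply/funext => x; rewrite take0.
rewrite (_ : (fun x => _) = (fun x => foldl f (f (h x) (thead (g x)))
    (take j [tuple of behead (g x)]))); last first.
  apply/funext => x; rewrite [in LHS](tuple_eta (g x)) /=.
  by [].
apply: IH.
  apply: hf => //; exact: (measurableT_comp (measurable_tnth _) mg).
exact: (measurableT_comp (@measurable_behead _ R m) mg).
Qed.

End MFoldl.

Section Meas.
Context (R : realType) (d : measure_display) (T : measurableType d)
  (P : probability T R) (n : nat) (B : 'I_n -> T -> R) (mu : 'I_n -> R)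
  (tau : 'S_n).
Hypothesis hmeas : forall i, measurable_fun setT (B i).
Hypothesis hindep : mutually_independent P B.
Hypothesis hsym : forall i, symmetric_around P (B i) (mu i).

Definition Yc (c : 'I_n -> R) (w : T) : n.-tuple R :=
  [tuple c i * (B (tau i) w - mu (tau i)) | i < n].

Lemma mYc c : measurable_fun setT (Yc c).
Proof.
apply/measurable_fun_tnthP => i.
rewrite (_ : _ \o _ = fun w => c i * (B (tau i) w - mu (tau i))); last first.
  by apply/funext => w /=; rewrite tnth_mktuple.
exact: (measurable_realfun.measurable_funM (measurable_cst _)
  (measurable_realfun.measurable_funB (hmeas _) (measurable_cst _))).
Qed.

Definition rect (A : 'I_n -> set R) : set (n.-tuple R) :=
  [set t | forall i, A i (tnth t i)].

Definition Grect : set (set (n.-tuple R)) :=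
  [set S | exists A, (forall i, measurable (A i)) /\ S = rect A].

Lemma rect_measurable A : (forall i, measurable (A i)) -> measurable (rect A).
Proof.
move=> mA.
have -> : rect A = \bigcap_(i in [set: 'I_n]) ((fun t : n.-tuple R => tnth t i) @^-1` A i).
  by apply/seteqP; split => t /= h i; [move=> _|]; apply: h.
apply: fin_bigcap_measurable; first exact: finite_finset.
move=> i _; rewrite -[X in measurable X]setTI; exact: measurable_tnth.
Qed.

Lemma measurable_Grect :
  (measurable : set (set (n.-tuple R))) = <<s Grect >>.
Proof.
apply/seteqP; split; last first.
  apply: smallest_sub; first exact: sigma_algebra_measurable.
  by move=> S [A [mA ->]]; exact: rect_measurable.
move=> S mS; apply: (smallest_sub (smallest_sigma_algebra setT Grect) _ mS).
elim/big_ind: _ => //.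
- by move=> F1 F2 h1 h2 X [/h1|/h2].
move=> i _ X [C mC <-].
apply: sub_sigma_algebra.
exists (fun j => if j == i then C else setT); split.
  by move=> j; case: ifP.
apply/seteqP; split => t /=.
  by move=> [_ h] j; case: eqP => [->|].
by move=> h; split => //; have := h i; rewrite eqxx.
Qed.

Lemma Yc_rect c A : (forall i, measurable (A i)) ->
  (forall i, c i = 1 \/ c i = -1) ->
  P (Yc c @^-1` rect A) = (\prod_(j in [set: 'I_n]%SET)
     P (B j @^-1` [set x | A ((tau^-1)%g j) (x - mu j)%R]))%E.
Proof.
move=> mA hc.
pose A' := fun j => [set x | A ((tau^-1)%g j) (c ((tau^-1)%g j) * (x - mu j))].
have E : Yc c @^-1` rect A =
    \bigcap_(j in [set j | j \in [set: 'I_n]%SET]) (B j @^-1` A' j).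
  apply/seteqP; split => w /=.
    move=> h j _; have := h ((tau^-1)%g j).
    by rewrite /Yc tnth_mktuple permKV.
  move=> h i; have hin : [set` [set: 'I_n]%SET] (tau i).
    by rewrite /= inE.
  have := h (tau i) hin.
  by rewrite /Yc tnth_mktuple /A' /= permK.
rewrite E hindep; last first.
  move=> j _; rewrite /A'.
  have mf : measurable_fun setT (fun x : R => c ((tau^-1)%g j) * (x - mu j)).
    exact: (measurable_realfun.measurable_funM (measurable_cst _)
      (measurable_realfun.measurable_funB (@measurable_id _ _ setT) (measurable_cst _))).
  by rewrite -[X in measurable X]setTI; apply: mf.
apply: eq_bigr => j _; rewrite /A'.
case: (hc ((tau^-1)%g j)) => ->.
  by congr (P _); apply/seteqP; split => w /=; rewrite mul1r.
have := hsym j _ (mA ((tau^-1)%g j)).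
rewrite /preimage /=.
have -> : [set w | A ((tau^-1)%g j) (-1 * (B j w - mu j))] =
    [set w | mu j - B j w \in A ((tau^-1)%g j)].
  by apply/seteqP; split => w /=; rewrite in_setE mulN1r opprB.
have -> : [set w | A ((tau^-1)%g j) (B j w - mu j)] =
    [set w | B j w - mu j \in A ((tau^-1)%g j)].
  by apply/seteqP; split => w /=; rewrite in_setE.
by move=> ->.
Qed.

Lemma Grect_setI : setI_closed Grect.
Proof.
move=> S1 S2 [A1 [mA1 ->]] [A2 [mA2 ->]].
exists (fun i => A1 i `&` A2 i); split; first by move=> i; exact: measurableI.
by apply/seteqP; split => t /=; [move=> [h1 h2] i; split|move=> h; split => i; case: (h i)].
Qed.

Lemma Grect_setT : Grect setT.
Proof.
exists (fun _ => setT); split => //.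
by apply/seteqP; split => t.
Qed.

Lemma law c : (forall i, c i = 1 \/ c i = -1) -> forall A, measurable A ->
  P (Yc c @^-1` A) = P (Yc (fun _ => 1) @^-1` A).
Proof.
move=> hc A mA.
have h1 : forall i : 'I_n, (fun _ => 1 : R) i = 1 \/ (fun _ => 1 : R) i = -1 by left.
have mc := mYc c; have m1 := mYc (fun _ => 1).
apply: (measure_unique Grect (fun _ => setT) measurable_Grect Grect_setI
  (fun _ => Grect_setT) _ (pushforward P (Yc c)) (pushforward P (Yc (fun _ => 1))) _ _ A mA).
- by rewrite bigcup_const.
- move=> S [B' [mB ->]].
  exact: (etrans (Yc_rect c B' mB hc) (esym (Yc_rect _ B' mB h1))).
- move=> _; change (P (Yc c @^-1` setT) < +oo)%E.
  rewrite preimage_setT probability_setT; exact: ltry.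
Qed.

Lemma int_law c : (forall i, c i = 1 \/ c i = -1) ->
  forall G : n.-tuple R -> R, measurable_fun setT G -> (forall t, 0 <= G t) ->
  (\int[P]_w (G (Yc c w))%:E = \int[P]_w (G (Yc (fun _ => 1) w))%:E)%E.
Proof.
move=> hc G mG G0.
have mG' := (measurable_realfun.measurable_EFinP _ G).2 mG.
have e : forall c', (\int[P]_w (G (Yc c' w))%:E =
    \int[pushforward P (Yc c')]_t (EFin \o G) t)%E.
  move=> c'; rewrite (ge0_integral_pushforward (mYc c') P measurableT mG').
    by rewrite preimage_setT.
  by move=> t _; rewrite /= lee_fin.
rewrite (e c) (e (fun _ => 1)).
apply: (eq_measure_integral (pushforward P (Yc (fun _ => 1)))).
- exact: mYc.
- exact: mYc.
- move=> h1 h2 A mA _.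
  change (P (Yc c @^-1` A) = P (Yc (fun _ => 1) @^-1` A)).
  exact: (law c hc A mA).
Qed.

Definition c_of (e : seq bool) (i : 'I_n) : R := if nth false e i then -1 else 1.

Lemma c_of_pm e i : c_of e i = 1 \/ c_of e i = -1.
Proof. by rewrite /c_of; case: ifP; [right|left]. Qed.

Lemma Yc_signed e w : size e = n ->
  val (Yc (c_of e) w) = signed e (val (Yc (fun _ => 1) w)).
Proof.
move=> he; apply: (@eq_from_nth _ 0).
  by rewrite size_signed !size_tuple.
move=> i; rewrite size_tuple => hi.
rewrite nth_signed ?size_tuple //.
rewrite -!(tnth_nth 0 _ (Ordinal hi)) !tnth_mktuple /c_of /=.
by case: ifP; rewrite ?mulN1r ?mul1r.
Qed.

Lemma sgn_sum_Yc (F : seq R -> R) w :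
  ((sgn_sum (Yc (fun _ => 1) w) F)%:E = \sum_(e <- allsigns n) (F (Yc (c_of e) w))%:E)%E.
Proof.
rewrite sgn_sum_allsigns size_tuple -sumEFin big_seq [RHS]big_seq.
apply: eq_bigr => e he; rewrite Yc_signed //; exact: allsigns_size he.
Qed.

Lemma key (F : seq R -> R) : measurable_fun setT (fun t : n.-tuple R => F t) ->
  (forall s, 0 <= F s) ->
  (((2 ^ n)%:R)%:E * \int[P]_w (F (Yc (fun _ => 1) w))%:E =
   \int[P]_w (sgn_sum (Yc (fun _ => 1) w) F)%:E)%E.
Proof.
move=> mF F0.
have mFe e := (measurable_realfun.measurable_EFinP setT _).2
   (measurableT_comp mF (mYc (c_of e))).
transitivity (\sum_(e <- allsigns n) \int[P]_w (F (Yc (c_of e) w))%:E)%E.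
  rewrite mule_natl -size_allsigns (eq_bigr (fun _ => \int[P]_w (F (Yc (fun _ => 1) w))%:E)%E).
    by rewrite sum_const_seq.
  by move=> e _; rewrite (int_law (c_of e) (c_of_pm e) _ mF (fun t => F0 t)).
rewrite -ge0_integral_sum //; last by move=> e w _; rewrite lee_fin.
apply: eq_integral => w _; exact/esym/sgn_sum_Yc.
Qed.

Lemma msgn (F : seq R -> R) : measurable_fun setT (fun t : n.-tuple R => F t) ->
  measurable_fun setT (fun w => (sgn_sum (Yc (fun _ => 1) w) F)%:E).
Proof.
move=> mF.
have -> : (fun w => (sgn_sum (Yc (fun _ => 1) w) F)%:E) =
    (fun w => \sum_(e <- allsigns n) (F (Yc (c_of e) w))%:E)%E.
  by apply/funext => w; exact: sgn_sum_Yc.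
apply: emeasurable_sum => e.
exact: ((measurable_realfun.measurable_EFinP setT _).2
   (measurableT_comp mF (mYc (c_of e)))).
Qed.

Lemma sumR_foldl (s : seq R) : sumR s = foldl +%R 0 s.
Proof.
rewrite /sumR; elim/last_ind: s => [|s x IH]; first by rewrite big_nil.
by rewrite -cats1 big_cat big_seq1 foldl_cat /= IH.
Qed.

Lemma main_sec k : (1 <= k)%N -> (k <= n)%N ->
  (\int[P]_w (wait (take k (Yc (fun _ => 1) w)))%:E <=
   \int[P]_w (Num.max 0 (sumR (take k (Yc (fun _ => 1) w))))%:E +
   \int[P]_w (Num.max 0 (sumR (take k.-1 (Yc (fun _ => 1) w))))%:E)%E.
Proof.
move=> hk1 hk2.
have hfW : forall h1 h2 : n.-tuple R -> R, measurable_fun setT h1 ->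
    measurable_fun setT h2 -> measurable_fun setT (fun x => Num.max 0 (h1 x + h2 x)).
  move=> h1 h2 m1 m2.
  exact: (measurable_realfun.measurable_maxr (measurable_cst _)
    (measurable_realfun.measurable_funD m1 m2)).
have hfD : forall h1 h2 : n.-tuple R -> R, measurable_fun setT h1 ->
    measurable_fun setT h2 -> measurable_fun setT (fun x => h1 x + h2 x).
  move=> h1 h2 m1 m2; exact: (measurable_realfun.measurable_funD m1 m2).
have mW : measurable_fun setT (fun t : n.-tuple R => wait (take k t)).
  exact: (@mfoldl R _ _ (fun a b => Num.max 0 (a + b)) hfW n (fun t => t) (fun _ => 0) k (measurable_cst _) (@measurable_id _ _ setT)).
have mS : forall j, measurable_fun setT
    (fun t : n.-tuple R => Num.max 0 (sumR (take j t))).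
  move=> j; rewrite (_ : (fun t => _) = fun t : n.-tuple R =>
      Num.max 0 (foldl +%R 0 (take j t))); last first.
    by apply/funext => t; rewrite sumR_foldl.
  exact: (measurable_realfun.measurable_maxr (measurable_cst _)
    (@mfoldl R _ _ +%R hfD n (fun t => t) (fun _ => 0) j (measurable_cst _) (@measurable_id _ _ setT))).
have W0 : forall s : seq R, 0 <= wait (take k s).
  move=> s; rewrite /wait; elim/last_ind: (take k s) => [|u x _] //.
  by rewrite foldl_rcons le_max lexx.
have S0 : forall j (s : seq R), 0 <= Num.max 0 (sumR (take j s)).
  by move=> j s; rewrite le_max lexx.
have hW := key (fun s => wait (take k s)) mW W0.
have h1 := key (fun s => Num.max 0 (sumR (take k s))) (mS k) (S0 k).
have h2 := key (fun s => Num.max 0 (sumR (take k.-1 s))) (mS k.-1) (S0 k.-1).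
have N0 : (0 < (2 ^ n)%:R :> R)%R by rewrite ltr0n expn_gt0.
have I1 : forall j, (0 <= \int[P]_w (Num.max 0 (sumR (take j (Yc (fun _ => 1) w))))%:E)%E.
  by move=> j; apply: integral_ge0 => w _; rewrite lee_fin le_max lexx.
have fN : (((2 ^ n)%:R : R)%:E) \is a fin_num by [].
have pN : (0 < ((2 ^ n)%:R)%:E)%E := N0.
rewrite -(lee_pmul2l fN pN).
rewrite (@muleDr _ _ (\int[P]_w (Num.max 0 (sumR (take k (Yc (fun _ => 1) w))))%:E)
  (\int[P]_w (Num.max 0 (sumR (take k.-1 (Yc (fun _ => 1) w))))%:E) fN); last first.
  by apply: ge0_adde_def; rewrite inE; exact: I1.

rewrite hW h1 h2.
rewrite -ge0_integralD //; first last.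
- exact: msgn.
- by move=> w _; rewrite lee_fin; apply: sgn_sum_ge0.
- exact: msgn.
- by move=> w _; rewrite lee_fin; apply: sgn_sum_ge0.
apply: ge0_le_integral => //.
- by move=> w _; rewrite lee_fin; apply: sgn_sum_ge0.
- exact: msgn.
- apply: emeasurable_funD; exact: msgn.
move=> w _; rewrite -EFinD lee_fin.
by apply: comb_main => //; rewrite size_tuple.
Qed.

End Meas.

Theorem lemma3p3 (R : realType) (d : measure_display) (T : measurableType d)
  (P : probability T R) (n : nat) (B : 'I_n -> T -> R) (mu : 'I_n -> R)
  (tau : 'S_n)
  (hmeas : forall i, measurable_fun setT (B i))
  (hint : forall i, P.-integrable setT (EFin \o B i))
  (hmean : forall i, ('E_P[B i] = (mu i)%:E)%E)
  (hindep : mutually_independent P B)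
  (hsym : forall i, symmetric_around P (B i) (mu i))
  (k : nat) (hk1 : (1 <= k)%N) (hk2 : (k <= n - 1)%N) :
  let X := fun (i : 'I_n) (w : T) => B i w - mu i in
  let Xs := fun w : T => [seq X (tau i) w | i <- enum 'I_n] in
  (\int[P]_w (wait (take k (Xs w)))%:E <=
     \int[P]_w (pos_part (\sum_(x <- take k (Xs w)) x))%:E +
     \int[P]_w (pos_part (\sum_(x <- take k.-1 (Xs w)) x))%:E)%E.
Proof.
have hk : (k <= n)%N by apply: leq_trans hk2 (leq_subr 1 n).
have hX : forall w, [seq B (tau i) w - mu (tau i) | i <- enum 'I_n] =
    val (@Yc R d T n B mu tau (fun _ => 1) w).
  move=> w; rewrite /Yc /=.
  by apply: eq_map => i; rewrite mul1r.
have H := @main_sec R d T P n B mu tau hmeas hindep hsym k hk1 hk.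
cbv zeta beta.
under [X in (X <= _)%E]eq_integral => w _ do rewrite hX.
under [X in (_ <= X + _)%E]eq_integral => w _ do rewrite hX.
under [X in (_ <= _ + X)%E]eq_integral => w _ do rewrite hX.
exact: H.
Qed.
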